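(* Let $\mathcal{R},\mathcal{R}',\mathcal{C},\mathcal{C}'$ be partitions of $\{1,\ldots,n\}$ such that $\mathcal{R}'$ is finer than $\mathcal{R}$ and $\mathcal{C}'$ is finer than $\mathcal{C}$. Then $U^{\mathcal{R}\times\mathcal{C}'}$ and $U^{\mathcal{R}'\times\mathcal{C}}$ intersect orthogonally in $\mathbb{R}^{S_n}$ (with the standard inner product), and \[ U^{\mathcal{R}\times\mathcal{C}'}\cap U^{\mathcal{R}'\times\mathcal{C}}=U^{\mathcal{R}\times\mathcal{C}}. \]
   Context: $S_n$ is the group of permutations of $\{1,\ldots,n\}$. A partition $\mathcal{Z}=(Z_1,\ldots,Z_s)$ is finer than $\mathcal{W}=(W_1,\ldots,W_t)$ if every $Z_i$ is contained in some $W_j$. For partitions $\mathcal{R}=(R_i)$, $\mathcal{C}=(C_j)$ of $\{1,\ldots,n\}$, the product partition of the $n\times n$ board is $\mathcal{R}\times\mathcal{C}=(R_i\times C_j)$, and for $\pi\in S_n$ its marginal is the matrix $|\pi_{\mathcal{R}\times\mathcal{C}}|=(t_{ij})$ with $t_{ij}=|\{s:(s,\pi(s))\in R_i\times C_j\}|$. $U^{\mathcal{B}}=\{v\in\mathbb{R}^{S_n}: |\pi_{\mathcal{B}}|=|\sigma_{\mathcal{B}}|\Rightarrow v(\pi)=v(\sigma)\}$. Subspaces $U,V$ intersect orthogonally if the orthogonal projection of $U$ onto $V$ equals $U\cap V$ (equivalently, the orthogonal projections onto $U$ and $V$ commute). *)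

(* Defs.v *)
From HB Require Import structures.
From mathcomp Require Import all_boot all_order all_algebra all_fingroup.
Set Implicit Arguments. Unset Strict Implicit. Unset Printing Implicit Defensive.
Import Order.TTheory GRing.Theory Num.Theory.
Local Open Scope ring_scope.

Definition vecS (R : realFieldType) (n : nat) := {ffun {perm 'I_n} -> R}.

Definition dotS (R : realFieldType) (n : nat) (u v : vecS R n) : R :=
  \sum_(s : {perm 'I_n}) u s * v s.

Definition finer (n : nat) (Zp Wp : {set {set 'I_n}}) : Prop :=
  forall Z, Z \in Zp -> exists2 W, W \in Wp & Z \subset W.

(* Entry (A,B) of the marginal |pi_{R x C}|: number of s with (s, pi s) in A x B. *)
Definition marg (n : nat) (pi : {perm 'I_n}) (A B : {set 'I_n}) : nat :=
  #|[set s | (s \in A) && (pi s \in B)]|.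

Definition same_marg (n : nat) (Rp Cp : {set {set 'I_n}}) (pi sigma : {perm 'I_n}) : Prop :=
  forall A B, A \in Rp -> B \in Cp -> marg pi A B = marg sigma A B.

Definition Usp (R : realFieldType) (n : nat) (Rp Cp : {set {set 'I_n}}) (v : vecS R n) : Prop :=
  forall pi sigma, same_marg Rp Cp pi sigma -> v pi = v sigma.

Definition is_orth_proj (R : realFieldType) (n : nat) (V : vecS R n -> Prop) (u v : vecS R n) : Prop :=
  V v /\ forall w, V w -> dotS (u - v) w = 0.

Definition orth_intersect (R : realFieldType) (n : nat) (U V : vecS R n -> Prop) : Prop :=
  forall x, (exists2 u, U u & is_orth_proj V u x) <-> (U x /\ V x).

(* Main.v *)
Require Import Defs.
From Stdlib Require Import Setoid.
From HB Require Import structures.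
From mathcomp Require Import all_boot all_order all_algebra all_fingroup.
Import Order.TTheory GRing.Theory Num.Theory.
Local Open Scope ring_scope.
Set Implicit Arguments. Unset Strict Implicit. Unset Printing Implicit Defensive.

Definition Gs n (P : {set {set 'I_n}}) : {set {perm 'I_n}} :=
  [set a : {perm 'I_n} | [forall A in P, forall s, (a s \in A) == (s \in A)]].

Lemma GsP n (P : {set {set 'I_n}}) (a : {perm 'I_n}) :
  reflect (forall A s, A \in P -> (a s \in A) = (s \in A)) (a \in Gs P).
Proof.
rewrite inE; apply: (iffP forall_inP) => [H A s /H /forallP /(_ s) /eqP //|H A /H HA].
by apply/forallP => s; rewrite HA.
Qed.

Lemma Gs1 n (P : {set {set 'I_n}}) : 1%g \in Gs P.
Proof. by apply/GsP => A s _; rewrite perm1. Qed.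

Lemma GsM n (P : {set {set 'I_n}}) a b : a \in Gs P -> b \in Gs P -> (a * b)%g \in Gs P.
Proof.
move=> ha hb; apply/GsP => A s HA.
by rewrite permM (GsP _ _ hb _ _ HA) (GsP _ _ ha _ _ HA).
Qed.

Lemma GsV n (P : {set {set 'I_n}}) a : a \in Gs P -> (a^-1)%g \in Gs P.
Proof.
move=> ha; apply/GsP => A s HA.
by rewrite -(GsP _ _ ha _ _ HA) permKV.
Qed.

Lemma inPb n (P : {set {set 'I_n}}) A x : partition P [set: 'I_n] -> A \in P ->
  (x \in A) = (pblock P x == A).
Proof.
case/and3P => /eqP hcov htriv _ HA; apply/idP/eqP => [xA|<-].
  exact: def_pblock.
by rewrite mem_pblock hcov inE.
Qed.

Lemma Gs_finer n (P P' : {set {set 'I_n}}) a :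
  partition P [set: 'I_n] -> partition P' [set: 'I_n] -> finer P' P ->
  a \in Gs P' -> a \in Gs P.
Proof.
move=> hP hP' hF ha; apply/GsP => A s HA.
rewrite !(inPb _ hP HA).
suff -> : pblock P (a s) = pblock P s by [].
have htriv : trivIset P by case/and3P: hP.
have hcov' : cover P' = [set: 'I_n] by case/and3P: hP' => /eqP.
set Z := pblock P' s.
have ZP : Z \in P' by apply: pblock_mem; rewrite hcov' inE.
have sZ : s \in Z by rewrite mem_pblock hcov' inE.
have asZ : a s \in Z by rewrite (GsP _ _ ha _ _ ZP).
case: (hF Z ZP) => W WP ZW.
by rewrite (def_pblock htriv WP (subsetP ZW _ sZ)) (def_pblock htriv WP (subsetP ZW _ asZ)).
Qed.

Definition Inv (R : realFieldType) n (P Q : {set {set 'I_n}}) (v : vecS R n) :=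
  forall pi a b, a \in Gs P -> b \in Gs Q -> v (a * pi * b)%g = v pi.

Lemma marg_inv n (P Q : {set {set 'I_n}}) pi a b A B :
  a \in Gs P -> b \in Gs Q -> A \in P -> B \in Q ->
  marg (a * pi * b)%g A B = marg pi A B.
Proof.
move=> ha hb HA HB; rewrite /marg.
have -> : [set s | (s \in A) && ((a * pi * b)%g s \in B)] =
          a @^-1: [set t | (t \in A) && (pi t \in B)].
  apply/setP => s; rewrite !inE !permM (GsP _ _ hb _ _ HB) (GsP _ _ ha _ _ HA).
  by [].
by rewrite card_preimset //; apply: perm_inj.
Qed.

Lemma count_card n (a : pred 'I_n) : count a (enum 'I_n) = #|a|.
Proof. rewrite cardE /enum_mem size_filter -enumT.
have -> : [seq x <- enum 'I_n | mem 'I_n x] = enum 'I_n.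
  by apply/all_filterP/allP.
by apply: eq_count. Qed.

Lemma dcoset n (P Q : {set {set 'I_n}}) pi sigma :
  partition P [set: 'I_n] -> partition Q [set: 'I_n] ->
  same_marg P Q pi sigma ->
  exists a b, [/\ a \in Gs P, b \in Gs Q & sigma = (a * pi * b)%g].
Proof.
move=> hP hQ hm.
have hcP : cover P = [set: 'I_n] by case/and3P: hP => /eqP.
have hcQ : cover Q = [set: 'I_n] by case/and3P: hQ => /eqP.
pose f := fun s => (pblock P s, pblock Q (sigma s)).
pose g := fun s => (pblock P s, pblock Q (pi s)).
have : perm_eq [tuple f i | i < n] [tuple g i | i < n].
  apply/allP => [[A B]] _; apply/eqP.
  rewrite /= !count_map -enumT !count_card.
  case hAB : ((A \in P) && (B \in Q)).
    case/andP: hAB => HA HB.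
    have E : forall rho : {perm 'I_n}, #|preim (fun s => (pblock P s, pblock Q (rho s))) (pred1 (A, B))|
                         = marg rho A B.
      move=> rho; rewrite /marg; apply: eq_card => s.
      by rewrite !inE /= xpair_eqE -(inPb _ hP HA) -(inPb _ hQ HB).
    by rewrite E E (hm A B HA HB).
  have F : forall t u, ((pblock P t, pblock Q u) == (A, B)) = false.
    move=> t u; apply/negbTE/eqP => -[e1 e2].
    by move: hAB; rewrite -e1 -e2 !pblock_mem ?hcP ?hcQ ?inE.
  by apply: eq_card => s; rewrite /= !inE /f /g /= !F.
case/tuple_permP => p Hp.
have Hfg : forall i, f i = g (p i).
  move=> i; have := congr1 (fun s => nth (f i) s i) Hp.
  by rewrite -!tnth_nth !tnth_mktuple.
exists p, (pi^-1 * p^-1 * sigma)%g; split.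
- apply/GsP => A s HA; rewrite !(inPb _ hP HA).
  by have [-> _] : f s = g (p s) by apply: Hfg.
- apply/GsP => B t HB; rewrite !(inPb _ hQ HB).
  set s := p^-1%g (pi^-1%g t).
  have et : t = pi (p s) by rewrite /s !permKV.
  have e2 : pblock Q (sigma s) = pblock Q (pi (p s)) by case: (Hfg s).
  by rewrite !permM -/s e2 -et.
- by rewrite !mulgA mulgK mulgV mul1g.
Qed.

Lemma Usp_Inv (R : realFieldType) n (P Q : {set {set 'I_n}}) (v : vecS R n) :
  partition P [set: 'I_n] -> partition Q [set: 'I_n] ->
  Usp P Q v <-> Inv P Q v.
Proof.
move=> hP hQ; split.
  move=> Hu pi a b ha hb; symmetry; apply: Hu => A B HA HB.
  by rewrite (marg_inv _ ha hb HA HB).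
move=> Hi pi sigma hm; have [a [b [ha hb ->]]] := dcoset hP hQ hm.
by rewrite Hi.
Qed.

Lemma dotSB (R : realFieldType) n (p q w : vecS R n) :
  dotS (p - q) w = dotS p w - dotS q w.
Proof.
rewrite /dotS -sumrB; apply: eq_bigr => s _; by rewrite !ffunE mulrBl.
Qed.

Lemma reindexL (R : realFieldType) n (G : {set {perm 'I_n}}) (F : {perm 'I_n} -> R) b :
  (forall x y, x \in G -> y \in G -> (x * y)%g \in G) ->
  (forall x, x \in G -> (x^-1)%g \in G) -> b \in G ->
  \sum_(g in G) F (b * g)%g = \sum_(g in G) F g.
Proof.
move=> hM hV hb.
rewrite (reindex (fun g => (b^-1 * g)%g)) /=; last first.
  by apply: onW_bij; exists (fun g => (b * g)%g) => g; rewrite ?mulKVg ?mulKg.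
rewrite [RHS](eq_bigl (fun g => (b^-1 * g)%g \in G)).
  by apply: eq_bigr => g _; rewrite mulKVg.
move=> g; apply/idP/idP => [hg|].
  by apply: hM => //; apply: hV.
by move/(hM _ _ hb); rewrite mulKVg.
Qed.

Theorem lemma2 (R : realFieldType) (n : nat)
  (Rp Rp' Cp Cp' : {set {set 'I_n}})
  (hR : partition Rp [set: 'I_n]) (hR' : partition Rp' [set: 'I_n])
  (hC : partition Cp [set: 'I_n]) (hC' : partition Cp' [set: 'I_n])
  (hRR : finer Rp' Rp) (hCC : finer Cp' Cp) :
  orth_intersect (@Usp R n Rp Cp') (@Usp R n Rp' Cp) /\
  (forall v : vecS R n, (@Usp R n Rp Cp' v /\ @Usp R n Rp' Cp v) <-> @Usp R n Rp Cp v).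
Proof.
have sR : forall a, a \in Gs Rp' -> a \in Gs Rp by move=> a; apply: Gs_finer.
have sC : forall a, a \in Gs Cp' -> a \in Gs Cp by move=> a; apply: Gs_finer.
have IU : forall v : vecS R n, Inv Rp Cp v -> Inv Rp Cp' v.
  by move=> v Hv pi a b ha hb; apply: Hv => //; apply: sC.
have IV : forall v : vecS R n, Inv Rp Cp v -> Inv Rp' Cp v.
  by move=> v Hv pi a b ha hb; apply: Hv => //; apply: sR.
split; last first.
  move=> v; rewrite !Usp_Inv //; split.
    case=> H1 H2 pi a b ha hb.
    have -> : (a * pi * b)%g = (1 * (a * pi) * b)%g by rewrite mul1g.
    rewrite H2 ?Gs1 //.
    have -> : (a * pi)%g = (a * pi * 1)%g by rewrite mulg1.
    by rewrite H1 ?Gs1.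
  by move=> H; split; [apply: IU | apply: IV].
move=> x; split; last first.
  case=> Ux Vx; exists x => //; split => // w _.
  rewrite /dotS big1 // => s _; by rewrite subrr ffunE mul0r.
case=> u; rewrite Usp_Inv // => Uu [Vx Ox].
rewrite Usp_Inv // in Vx.
pose k := #|Gs Cp|.
have k0 : (k%:R : R) != 0 by rewrite pnatr_eq0 -lt0n; apply/card_gt0P; exists 1%g; apply: Gs1.
pose y : vecS R n := [ffun pi => (k%:R)^-1 * \sum_(g in Gs Cp) u (pi * g)%g].
have Y1 : Inv Rp Cp y.
  move=> pi a b ha hb; rewrite !ffunE; congr (_ * _).
  rewrite -(reindexL (fun g => u (pi * g)%g) (@GsM _ _) (@GsV _ _) hb).
  apply: eq_bigr => g _.
  have -> : (a * pi * b * g)%g = (a * (pi * b * g) * 1)%g by rewrite mulg1 !mulgA.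
  by rewrite Uu ?Gs1 // mulgA.
have Y2 : forall w, Inv Rp' Cp w -> dotS (u - y) w = 0.
  move=> w Vw; rewrite dotSB; apply/eqP; rewrite subr_eq0; apply/eqP.
  rewrite /dotS /y.
  under [RHS]eq_bigr => pi _ do rewrite ffunE -mulrA mulr_suml.
  rewrite -mulr_sumr exchange_big /=.
  rewrite [X in _ = _ * X](eq_bigr (fun _ => \sum_s u s * w s)).
    by rewrite sumr_const -/k -[(\sum_s _) *+ _]mulr_natl mulrA mulVf // mul1r.
  move=> g hg.
  rewrite [RHS](reindex_inj (mulIg g)) /=.
  apply: eq_bigr => pi _.
  have -> : w (pi * g)%g = w (1 * pi * g)%g by rewrite mul1g.
  by rewrite Vw ?Gs1.
pose d := y - x.
have Vd : Inv Rp' Cp d.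
  move=> pi a b ha hb; rewrite /d !ffunE; have := IV _ Y1 pi a b ha hb; rewrite /y !ffunE => ->; by rewrite Vx.
have hx : forall w, Inv Rp' Cp w -> dotS (u - x) w = 0.
  by move=> w /(Usp_Inv _ hR' hC) /Ox.
have Dd : dotS d d = 0.
  have E : d = (u - x) - (u - y).
    by apply/ffunP => s; rewrite !ffunE opprB [RHS]addrC addrA subrK.
  by rewrite {1}E dotSB (hx _ Vd) (Y2 _ Vd) subrr.
have H0 : forall s, d s * d s = 0.
  move=> s; apply: (@psumr_eq0P _ _ predT (fun s => d s * d s)) => //.
  by move=> t _; rewrite -expr2 sqr_ge0.
have exy : x = y.
  apply/ffunP => pi; have /eqP := H0 pi.
  by rewrite mulf_eq0 orbb /d !ffunE subr_eq0 => /eqP ->.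
by rewrite !Usp_Inv // exy; split; [apply: IU | apply: IV].
Qed.
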